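(* Let $\alpha\in(0,\frac\pi2)$ and $C_\alpha=(\alpha/\pi)^2+(1-\alpha/\pi)^2$. Let $N^v,N^b\in\{0,1,2,\dots\}$, and let $\{n^0_j\}_{j=1}^{N^v}$, $\{n^+_i,n^-_i\}_{i=1}^{N^b}$ be integers with $\sum_{i=1}^{N^b}(n^+_i+n^-_i)+\sum_{j=1}^{N^v}n^0_j=D$. Then $$\sum_{j=1}^{N^v}(n^0_j)^2+\sum_{i=1}^{N^b}\Big[\Big(n^-_i+\frac\alpha\pi\Big)^2+\Big(n^+_i-\frac\alpha\pi\Big)^2\Big]\ge|D|\,C_\alpha.$$ Furthermore, if $D>0$, equality holds if and only if $n^0_j=0$ for all $j$, $N^b=D$, and $n^+_i=1$, $n^-_i=0$ for $i=1,\dots,D$; while if $D<0$, equality holds if and only if $n^0_j=0$ for all $j$, $N^b=|D|$, and $n^+_i=0$, $n^-_i=-1$ for all $i$. *)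

(* Defs.v *)
From mathcomp Require Import all_boot all_order all_algebra.
From mathcomp Require Import reals trigo.
Set Implicit Arguments. Unset Strict Implicit. Unset Printing Implicit Defensive.
Import Order.TTheory GRing.Theory Num.Theory.
Local Open Scope ring_scope.

Definition C_alpha (R : realType) (alpha : R) : R :=
  (alpha / pi) ^+ 2 + (1 - alpha / pi) ^+ 2.

Definition lhs6p2 (R : realType) (alpha : R) (Nv Nb : nat)
  (n0 : 'I_Nv -> int) (np nm : 'I_Nb -> int) : R :=
  \sum_(j < Nv) ((n0 j)%:~R) ^+ 2
  + \sum_(i < Nb) (((nm i)%:~R + alpha / pi) ^+ 2 + ((np i)%:~R - alpha / pi) ^+ 2).

(* Main.v *)
Require Import Defs.
From mathcomp Require Import all_boot all_order all_algebra.
From mathcomp Require Import reals trigo.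
From mathcomp Require Import zify ring lra.
Import Order.TTheory GRing.Theory Num.Theory.
Local Open Scope ring_scope.
Set Implicit Arguments.

Lemma intR_le (R : realFieldType) (m n : int) : m <= n -> (m%:~R : R) <= n%:~R.
Proof. by rewrite ler_int. Qed.

Lemma key (R : realFieldType) (k : int) (c : R) : -1 < c < 1 ->
  0 <= k%:~R * (k%:~R + c) /\ (k != 0 -> 0 < k%:~R * (k%:~R + c)).
Proof.
move=> /andP[c1 c2].
case: (ltgtP k 0) => hk.
- have h : k + 1 <= 0 by lia.
  have := @intR_le R _ _ h; rewrite intrD /= => hR.
  split; [|move=> _]; nra.
- have h : 1 <= k by lia.
  have := @intR_le R _ _ h; rewrite /= => hR.
  split; [|move=> _]; nra.
- by subst k; rewrite mul0r; split => //; rewrite eqxx.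
Qed.

Section Terms.
Variable R : realFieldType.
Variable a : R.
Hypothesis ha : 0 < a < 1/2.
Let C := a ^+ 2 + (1 - a) ^+ 2.

Definition hp (m p : int) : R :=
  ((m%:~R + a) ^+ 2 + (p%:~R - a) ^+ 2) - (m%:~R + p%:~R) * C.
Definition hn (m p : int) : R :=
  ((m%:~R + a) ^+ 2 + (p%:~R - a) ^+ 2) + (m%:~R + p%:~R) * C.

Lemma hp_ge0 m p : 0 <= hp m p /\ (hp m p = 0 <-> m = 0 /\ p = 1).
Proof.
case/andP: ha => a0 a1.
have e : hp m p = m%:~R * (m%:~R + (4*a - 2 * a^+2 - 1)) +
   (p - 1)%:~R * ((p - 1)%:~R + (1 - 2 * a ^+ 2)).
  rewrite /hp /C intrB /=; ring.
have [k1 k2] := @key R m (4*a - 2 * a^+2 - 1) ltac:(apply/andP; split; nra).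
have [k3 k4] := @key R (p - 1) (1 - 2 * a^+2) ltac:(apply/andP; split; nra).
rewrite e; split; first exact: addr_ge0.
split.
- move=> h0.
  case: (eqVneq m 0) => hm; case: (eqVneq (p - 1) 0) => hp1.
  + split => //; lia.
  + exfalso; have := k4 hp1; lra.
  + exfalso; have := k2 hm; lra.
  + exfalso; have := k2 hm; lra.
- case=> -> ->; rewrite subrr /=; ring.
Qed.

Lemma hn_ge0 m p : 0 <= hn m p /\ (hn m p = 0 <-> m = -1 /\ p = 0).
Proof.
have e : hn m p = hp (- p) (- m) by rewrite /hn /hp !intrN; ring.
have [h1 h2] := hp_ge0 (- p) (- m).
rewrite e; split => //; rewrite h2; split; case=> ? ?; split; lia.
Qed.

Lemma gp_ge0 (n : int) : 0 <= n%:~R ^+ 2 - n%:~R * C /\ (n%:~R ^+ 2 - n%:~R * C = 0 -> n = 0).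
Proof.
case/andP: ha => a0 a1.
have [k1 k2] := @key R n (- C) ltac:(apply/andP; rewrite /C; split; nra).
have e : n%:~R ^+ 2 - n%:~R * C = n%:~R * (n%:~R + - C) by ring.
rewrite e; split => // h0; case: (eqVneq n 0) => // hn0; exfalso; have := k2 hn0; lra.
Qed.

Lemma gn_ge0 (n : int) : 0 <= n%:~R ^+ 2 + n%:~R * C /\ (n%:~R ^+ 2 + n%:~R * C = 0 -> n = 0).
Proof.
case/andP: ha => a0 a1.
have [k1 k2] := @key R n C ltac:(apply/andP; rewrite /C; split; nra).
have e : n%:~R ^+ 2 + n%:~R * C = n%:~R * (n%:~R + C) by ring.
rewrite e; split => // h0; case: (eqVneq n 0) => // hn0; exfalso; have := k2 hn0; lra.
Qed.
End Terms.
Arguments hp {R}. Arguments hn {R}. Arguments hp_ge0 {R a}. Arguments hn_ge0 {R a}.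
Arguments gp_ge0 {R a}. Arguments gn_ge0 {R a}.

Lemma decomp (R : realType) (a e : R) (Nv Nb : nat)
  (n0 : 'I_Nv -> int) (np nm : 'I_Nb -> int) (D : int)
  (hD : \sum_(i < Nb) (np i + nm i) + \sum_(j < Nv) n0 j = D) (C : R) :
  \sum_(j < Nv) ((n0 j)%:~R) ^+ 2
  + \sum_(i < Nb) (((nm i)%:~R + a) ^+ 2 + ((np i)%:~R - a) ^+ 2)
  = D%:~R * C * e + \sum_(j < Nv) ((n0 j)%:~R ^+ 2 - e * (n0 j)%:~R * C)
    + \sum_(i < Nb) (((nm i)%:~R + a) ^+ 2 + ((np i)%:~R - a) ^+ 2
                      - e * ((nm i)%:~R + (np i)%:~R) * C).
Proof.
rewrite -hD rmorphD /= !rmorph_sum /= !mulrDl !big_distrl /=.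
have E : forall u v w z : R, u + v + w + z = (v + w) + (u + z) by move=> *; ring.
rewrite [RHS]E -!big_split /=.
congr (_ + _); apply: eq_bigr => i _; rewrite ?intrD /=; ring.
Qed.
Arguments decomp {R} a e {Nv Nb} n0 np nm {D} hD C.

Theorem lemma6p2 (R : realType) (alpha : R) (Nv Nb : nat)
  (n0 : 'I_Nv -> int) (np nm : 'I_Nb -> int) (D : int)
  (halpha : 0 < alpha < pi / 2%:R)
  (hD : \sum_(i < Nb) (np i + nm i) + \sum_(j < Nv) n0 j = D) :
  `|D|%:~R * C_alpha alpha <= lhs6p2 alpha n0 np nm
  /\ (0 < D ->
      (lhs6p2 alpha n0 np nm = `|D|%:~R * C_alpha alpha <->
       (forall j, n0 j = 0) /\ (Nb : int) = D /\
       (forall i, np i = 1 /\ nm i = 0)))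
  /\ (D < 0 ->
      (lhs6p2 alpha n0 np nm = `|D|%:~R * C_alpha alpha <->
       (forall j, n0 j = 0) /\ (Nb : int) = `|D| /\
       (forall i, np i = 0 /\ nm i = -1))).
Proof.
have pi0 : (0 : R) < pi := pi_gt0 R.
case/andP: halpha => al0 al1.
have ha : 0 < alpha / pi < 1 / 2.
  apply/andP; split; first exact: divr_gt0.
  rewrite ltr_pdivrMr //; lra.
rewrite /lhs6p2 /C_alpha.
set a := alpha / pi in ha *. clearbody a.
set C := a ^+ 2 + (1 - a) ^+ 2.
have E1 : \sum_(j < Nv) ((n0 j)%:~R) ^+ 2
  + \sum_(i < Nb) (((nm i)%:~R + a) ^+ 2 + ((np i)%:~R - a) ^+ 2)
  = D%:~R * C + \sum_(j < Nv) ((n0 j)%:~R ^+ 2 - (n0 j)%:~R * C)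
    + \sum_(i < Nb) hp a (nm i) (np i).
  rewrite (decomp a 1 n0 np nm hD C) mulr1; congr (_ + _ + _); apply: eq_bigr => i _;
    rewrite /hp /C; ring.
have E2 : \sum_(j < Nv) ((n0 j)%:~R) ^+ 2
  + \sum_(i < Nb) (((nm i)%:~R + a) ^+ 2 + ((np i)%:~R - a) ^+ 2)
  = (- D)%:~R * C + \sum_(j < Nv) ((n0 j)%:~R ^+ 2 + (n0 j)%:~R * C)
    + \sum_(i < Nb) hn a (nm i) (np i).
  rewrite (decomp a (-1) n0 np nm hD C) intrN; congr (_ + _ + _);
    [ring | apply: eq_bigr => i _ ..]; rewrite /hn /C; ring.
have G1 : 0 <= \sum_(j < Nv) ((n0 j)%:~R ^+ 2 - (n0 j)%:~R * C :> R).
  by apply: sumr_ge0 => j _; case: (gp_ge0 ha (n0 j)).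
have H1 : 0 <= \sum_(i < Nb) hp a (nm i) (np i).
  by apply: sumr_ge0 => i _; case: (hp_ge0 ha (nm i) (np i)).
have G2 : 0 <= \sum_(j < Nv) ((n0 j)%:~R ^+ 2 + (n0 j)%:~R * C :> R).
  by apply: sumr_ge0 => j _; case: (gn_ge0 ha (n0 j)).
have H2 : 0 <= \sum_(i < Nb) hn a (nm i) (np i).
  by apply: sumr_ge0 => i _; case: (hn_ge0 ha (nm i) (np i)).
split; [|split].
- case: (lerP 0 D) => hD0.
  + rewrite ger0_norm // E1; lra.
  + rewrite ltr0_norm // E2; lra.
- move=> hD0; rewrite gtr0_norm // E1; split.
  + move=> h.
    have h0 : \sum_(j < Nv) ((n0 j)%:~R ^+ 2 - (n0 j)%:~R * C :> R) = 0 by lra.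
    have h0' : \sum_(i < Nb) hp a (nm i) (np i) = 0 by lra.
    have hn0 : forall j, n0 j = 0.
      move=> j; apply: (proj2 (gp_ge0 ha (n0 j))).
      by apply: (psumr_eq0P _ h0) => // k _; case: (gp_ge0 ha (n0 k)).
    have hpm : forall i, np i = 1 /\ nm i = 0.
      move=> i; have [_ [+ _]] := hp_ge0 ha (nm i) (np i).
      move=> /(_ _)[]; last by move=> -> ->.
      by apply: (psumr_eq0P _ h0') => // k _; case: (hp_ge0 ha (nm k) (np k)).
    split => //; split => //.
    move: hD; rewrite [X in _ + X]big1 ?addr0; last by move=> j _; exact: hn0.
    under eq_bigr => i _ do rewrite (proj1 (hpm i)) (proj2 (hpm i)) addr0.
    by rewrite sumr_const card_ord natz.
  + case=> hn0 [_ hpm].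
    rewrite !big1 ?addr0 //.
    * by move=> i _; rewrite (proj1 (hpm i)) (proj2 (hpm i)); apply/(proj2 (hp_ge0 ha 0 1)).
    * by move=> j _; rewrite hn0; rewrite mul0r; ring.
- move=> hD0; rewrite ltr0_norm // E2; split.
  + move=> h.
    have h0 : \sum_(j < Nv) ((n0 j)%:~R ^+ 2 + (n0 j)%:~R * C :> R) = 0 by lra.
    have h0' : \sum_(i < Nb) hn a (nm i) (np i) = 0 by lra.
    have hn0 : forall j, n0 j = 0.
      move=> j; apply: (proj2 (gn_ge0 ha (n0 j))).
      by apply: (psumr_eq0P _ h0) => // k _; case: (gn_ge0 ha (n0 k)).
    have hpm : forall i, np i = 0 /\ nm i = -1.
      move=> i; have [_ [+ _]] := hn_ge0 ha (nm i) (np i).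
      move=> /(_ _)[]; last by move=> -> ->.
      by apply: (psumr_eq0P _ h0') => // k _; case: (hn_ge0 ha (nm k) (np k)).
    split => //; split => //.
    move: hD; rewrite [X in _ + X]big1 ?addr0; last by move=> j _; exact: hn0.
    under eq_bigr => i _ do rewrite (proj1 (hpm i)) (proj2 (hpm i)) add0r.
    rewrite sumr_const card_ord => <-.
    by rewrite mulNrn opprK natz.
  + case=> hn0 [_ hpm].
    rewrite !big1 ?addr0 //.
    * by move=> i _; rewrite (proj1 (hpm i)) (proj2 (hpm i)); apply/(proj2 (hn_ge0 ha (-1) 0)).
    * by move=> j _; rewrite hn0; rewrite mul0r; ring.
Qed.
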